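(* Consider a finite tabular MDP with a unique optimal policy $\pi^*$, in which all states are reachable: $d_\rho^\pi(s)\ge d_{\min}>0$ for all $s\in\mathcal S$ and all policies $\pi$ with full action support. Under the discrete EG update $\pi_{t+1}(a|s)=\pi_t(a|s)\,e^{\eta[U^t_a(s)]_+}/Z^t_s$ with a sufficiently small constant step size $\eta>0$ (started from a softmax policy), (1) $V(\pi_t)\to V^*=V(\pi^* )$, and (2) $\pi_t\to\pi^*$.
   Context: A finite MDP $(\mathcal S,\mathcal A,P,r,\gamma,\rho)$ has finite state and action spaces, transition kernel $P(s'|s,a)$, reward $r(s,a)\in[0,1]$, discount $\gamma\in[0,1)$, initial distribution $\rho$. Tabular softmax policies are $\pi_\theta(a|s)=e^{\theta(s,a)}/\sum_{a'}e^{\theta(s,a')}$. $V^\pi(s)$ and $Q^\pi(s,a)$ are the expected discounted returns from $s$ (resp. from $s$ taking $a$ first), $V(\pi)=\mathbb{E}_{s\sim\rho}V^\pi(s)$, $V^*$ the optimal value, and $d_\rho^\pi(s)=(1-\gamma)\sum_{t\ge0}\gamma^t\Pr(s_t=s\mid\rho,\pi)$. At iteration $t$, $U^t_a(s):=Q^{\pi_t}(s,a)-V^{\pi_t}(s)$, $[x]_+=\max(x,0)$, and $Z^t_s:=\sum_{a'}\pi_t(a'|s)e^{\eta[U^t_{a'}(s)]_+}$. *)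

(* Defs.v *)
From HB Require Import structures.
From mathcomp Require Import all_boot all_order all_algebra.
From mathcomp Require Import all_classical all_reals all_analysis.
Set Implicit Arguments. Unset Strict Implicit. Unset Printing Implicit Defensive.
Import Order.TTheory GRing.Theory Num.Theory.
Local Open Scope ring_scope.

Section MDP.
Variables (R : realType) (S A : finType).
(* transition kernel P s a s' = P(s'|s,a); reward r s a *)
Variables (P : S -> A -> S -> R) (r : S -> A -> R) (gamma : R).

Definition is_mdp : Prop :=
  (forall s a s', 0 <= P s a s') /\ (forall s a, \sum_(s' : S) P s a s' = 1) /\
  (forall s a, 0 <= r s a <= 1) /\ 0 <= gamma < 1.

Definition is_dist (rho : S -> R) : Prop :=
  (forall s, 0 <= rho s) /\ \sum_(s : S) rho s = 1.

(* stationary (stochastic) Markov policy: pi s a = pi(a|s) *)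
Definition is_policy (pi : S -> A -> R) : Prop :=
  (forall s a, 0 <= pi s a) /\ (forall s, \sum_(a : A) pi s a = 1).

Definition full_support (pi : S -> A -> R) : Prop := forall s a, 0 < pi s a.

Definition softmax (theta : S -> A -> R) : S -> A -> R :=
  fun s a => expR (theta s a) / \sum_(a' : A) expR (theta s a').

(* state_prob pi s0 t s = Pr(s_t = s | s_0 = s0, pi) *)
Fixpoint state_prob (pi : S -> A -> R) (s0 : S) (t : nat) : S -> R :=
  match t with
  | 0%N => fun s => if s == s0 then 1 else 0
  | t'.+1 => fun s => \sum_(x : S) state_prob pi s0 t' x *
                        \sum_(a : A) pi x a * P x a s
  end.

Definition exp_reward (pi : S -> A -> R) (s0 : S) (t : nat) : R :=
  \sum_(s : S) state_prob pi s0 t s * \sum_(a : A) pi s a * r s a.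

Definition Vs (pi : S -> A -> R) (s : S) : R :=
  limn (fun n => \sum_(t < n) gamma ^+ t * exp_reward pi s t).

Definition Qsa (pi : S -> A -> R) (s : S) (a : A) : R :=
  r s a + gamma * \sum_(s' : S) P s a s' * Vs pi s'.

Definition Vrho (rho : S -> R) (pi : S -> A -> R) : R :=
  \sum_(s : S) rho s * Vs pi s.

Definition visitation (rho : S -> R) (pi : S -> A -> R) (s : S) : R :=
  (1 - gamma) * limn (fun n => \sum_(t < n) gamma ^+ t *
                        \sum_(s0 : S) rho s0 * state_prob pi s0 t s).

Definition optimal_policy (pi : S -> A -> R) : Prop :=
  is_policy pi /\ forall pi', is_policy pi' -> forall s, Vs pi' s <= Vs pi s.

Definition adv (pi : S -> A -> R) (s : S) (a : A) : R := Qsa pi s a - Vs pi s.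

Definition posp (x : R) : R := Num.max x 0.

Definition Zn (eta : R) (pi : S -> A -> R) (s : S) : R :=
  \sum_(a' : A) pi s a' * expR (eta * posp (adv pi s a')).

Definition eg_step (eta : R) (pi : S -> A -> R) : S -> A -> R :=
  fun s a => pi s a * expR (eta * posp (adv pi s a)) / Zn eta pi s.

Fixpoint eg_iter (eta : R) (theta : S -> A -> R) (t : nat) : S -> A -> R :=
  match t with
  | 0%N => softmax theta
  | t'.+1 => eg_step eta (eg_iter eta theta t')
  end.

End MDP.

(* Main.v *)
Require Import Defs.
From HB Require Import structures.
From mathcomp Require Import all_boot all_order all_algebra.
From mathcomp Require Import all_classical all_reals all_analysis.
From mathcomp Require Import ring lra.
Import Order.TTheory GRing.Theory Num.Theory.
Import numFieldNormedType.Exports.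
Local Open Scope classical_set_scope.
Local Open Scope ring_scope.
Set Implicit Arguments. Unset Strict Implicit.

Lemma ex_argmin (R : realType) (I : finType) (i0 : I) (F : I -> R) :
  exists j, forall i, F j <= F i.
Proof. by case: (@arg_minP _ _ I i0 xpredT F isT) => j _ H; exists j => i; exact: H. Qed.
Lemma ex_argmax (R : realType) (I : finType) (i0 : I) (F : I -> R) :
  exists j, forall i, F i <= F j.
Proof. by case: (@arg_maxP _ _ I i0 xpredT F isT) => j _ H; exists j => i; exact: H. Qed.

Section Gen.
Variable R : realType.

Lemma cvg_sumR (I : Type) (rr : seq I) (f : I -> nat -> R) (l : I -> R) :
  (forall i, f i n @[n --> \oo] --> l i) ->
  (\sum_(i <- rr) f i n) @[n --> \oo] --> \sum_(i <- rr) l i.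
Proof.
move=> H; elim: rr => [|i rr IH].
  rewrite big_nil; under eq_fun do rewrite big_nil; exact: cvg_cst.
rewrite big_cons; under eq_fun do rewrite big_cons.
exact: cvgD.
Qed.

Lemma geo_bound (g : R) (e : nat -> R) n : 0 <= g < 1 ->
  (forall t, 0 <= e t <= 1) -> \sum_(t < n) g ^+ t * e t <= (1 - g)^-1.
Proof.
move=> /andP[g0 g1]; elim: n e => [|n IH] e He.
  by rewrite big_ord0 invr_ge0 subr_ge0 ltW.
rewrite big_ord_recl expr0 mul1r.
under eq_bigr do rewrite exprS -mulrA.
rewrite -mulr_sumr.
have := IH (fun t => e t.+1) (fun t => He t.+1) => /= h.
have h2 : g * \sum_(i < n) g ^+ i * e (bump 0 i) <= g * (1 - g)^-1.
  by rewrite ler_wpM2l.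
have [_ ] := andP (He 0%N) => e1.
have -> : (1 - g)^-1 = 1 + g * (1 - g)^-1.
  by field; rewrite subr_eq0 gt_eqF.
by apply: lerD.
Qed.
End Gen.

Section MDPp.
Variables (R : realType) (S A : finType).
Variables (P : S -> A -> S -> R) (r : S -> A -> R) (gamma : R).
Hypothesis HM : is_mdp P r gamma.

Definition K (pi : S -> A -> R) x y := \sum_(a : A) pi x a * P x a y.
Definition rp (pi : S -> A -> R) x := \sum_(a : A) pi x a * r x a.

Lemma P_ge0 s a s' : 0 <= P s a s'. Proof. by case: HM. Qed.
Lemma P_sum s a : \sum_(s' : S) P s a s' = 1. Proof. by case: HM => _ []. Qed.
Lemma r_bnd s a : 0 <= r s a <= 1. Proof. by case: HM => _ [] _ []. Qed.
Lemma g_bnd : 0 <= gamma < 1. Proof. by case: HM => _ [] _ []. Qed.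

Lemma sp_S pi s0 t s : state_prob P pi s0 t.+1 s =
  \sum_(x : S) state_prob P pi s0 t x * K pi x s.
Proof. by []. Qed.

Lemma sp_back pi s0 t s : state_prob P pi s0 t.+1 s =
  \sum_(y : S) K pi s0 y * state_prob P pi y t s.
Proof.
elim: t s => [|t IH] s.
  rewrite /= (bigD1 s0) //= eqxx mul1r [X in _ + X]big1 ?addr0; last first.
    by move=> x Hx; rewrite (negbTE Hx) mul0r.
  rewrite (bigD1 s) //= eqxx mulr1 [X in _ + X]big1 ?addr0 //.
  by move=> x Hx; rewrite eq_sym (negbTE Hx) mulr0.
rewrite sp_S.
under eq_bigr do rewrite IH mulr_suml.
rewrite exchange_big; apply: eq_bigr => y _.
by rewrite sp_S mulr_sumr; apply: eq_bigr => x _; rewrite mulrA.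
Qed.

Lemma sumQ (pi' pi : S -> A -> R) s : \sum_a pi' s a * Qsa P r gamma pi s a =
  rp pi' s + gamma * \sum_y K pi' s y * Vs P r gamma pi y.
Proof.
rewrite /Qsa /rp /K.
under eq_bigr do rewrite mulrDr.
rewrite big_split /=; congr (_ + _).
rewrite [RHS]mulr_sumr; under [RHS]eq_bigr do rewrite mulr_suml mulr_sumr.
rewrite [RHS]exchange_big /= ; apply: eq_bigr => a _.
rewrite mulr_sumr mulr_sumr; apply: eq_bigr => y _.
by ring.
Qed.

Lemma sumQW (pi' : S -> A -> R) (W : S -> R) s :
  \sum_a pi' s a * (r s a + gamma * \sum_y P s a y * W y) =
  rp pi' s + gamma * \sum_y K pi' s y * W y.
Proof.
rewrite /rp /K.
under eq_bigr do rewrite mulrDr.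
rewrite big_split /=; congr (_ + _).
rewrite [RHS]mulr_sumr; under [RHS]eq_bigr do rewrite mulr_suml mulr_sumr.
rewrite [RHS]exchange_big /= ; apply: eq_bigr => a _.
rewrite mulr_sumr mulr_sumr; apply: eq_bigr => y _.
by ring.
Qed.

Section Pol.
Variable pi : S -> A -> R.
Hypothesis Hpi : is_policy pi.

Lemma pi_ge0 s a : 0 <= pi s a. Proof. by case: Hpi. Qed.
Lemma pi_sum s : \sum_a pi s a = 1. Proof. by case: Hpi. Qed.

Lemma K_ge0 x y : 0 <= K pi x y.
Proof. by apply: sumr_ge0 => a _; rewrite mulr_ge0 ?pi_ge0 ?P_ge0. Qed.
Lemma K_sum x : \sum_y K pi x y = 1.
Proof.
rewrite /K exchange_big /= -(pi_sum x); apply: eq_bigr => a _.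
by rewrite -mulr_sumr P_sum mulr1.
Qed.
Lemma rp_bnd x : 0 <= rp pi x <= 1.
Proof.
apply/andP; split.
  by apply: sumr_ge0 => a _; rewrite mulr_ge0 ?pi_ge0 //; case/andP: (r_bnd x a).
rewrite -(pi_sum x); apply: ler_sum => a _.
by rewrite ler_piMr ?pi_ge0 //; case/andP: (r_bnd x a).
Qed.

Lemma sp_ge0 s0 t s : 0 <= state_prob P pi s0 t s.
Proof.
elim: t s => [|t IH] s /=; first by case: eqP.
apply: sumr_ge0 => x _; rewrite mulr_ge0 // sumr_ge0 // => a _.
by rewrite mulr_ge0 ?pi_ge0 ?P_ge0.
Qed.

Lemma sp_sum s0 t : \sum_s state_prob P pi s0 t s = 1.
Proof.
elim: t => [|t IH] /=.
  rewrite (bigD1 s0) //= eqxx [X in _ + X]big1 ?addr0 // => x /negbTE -> //.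
rewrite exchange_big /= -IH; apply: eq_bigr => x _.
by rewrite -mulr_sumr (K_sum x) mulr1.
Qed.

Lemma er_bnd s0 t : 0 <= exp_reward P r pi s0 t <= 1.
Proof.
rewrite /exp_reward; apply/andP; split.
  by apply: sumr_ge0 => x _; rewrite mulr_ge0 ?sp_ge0 //; case/andP: (rp_bnd x).
rewrite -(sp_sum s0 t); apply: ler_sum => x _.
by rewrite ler_piMr ?sp_ge0 //; case/andP: (rp_bnd x).
Qed.

Definition usum s n := \sum_(t < n) gamma ^+ t * exp_reward P r pi s t.

Lemma usum_cvg s : usum s n @[n --> \oo] --> Vs P r gamma pi s.
Proof.
have H : cvgn (usum s).
  apply: nondecreasing_is_cvgn.
    apply/nondecreasing_seqP => n; rewrite /usum big_ord_recr /= lerDl.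
    by rewrite mulr_ge0 ?exprn_ge0 //; [case/andP: g_bnd|case/andP: (er_bnd s n)].
  exists (1 - gamma)^-1 => _ [n _ <-].
  by apply: geo_bound; [exact: g_bnd| move=> t; exact: er_bnd].
exact: H.
Qed.

Lemma er_step s t : exp_reward P r pi s t.+1 =
  \sum_y K pi s y * exp_reward P r pi y t.
Proof.
rewrite /exp_reward; under eq_bigr do rewrite sp_back mulr_suml.
rewrite exchange_big /=; apply: eq_bigr => y _.
by rewrite mulr_sumr; apply: eq_bigr => x _; rewrite mulrA.
Qed.

Lemma Bellman_K s : Vs P r gamma pi s =
  rp pi s + gamma * \sum_y K pi s y * Vs P r gamma pi y.
Proof.
have H1 := @usum_cvg s; rewrite -cvg_shiftS in H1.
have H2 : usum s n.+1 @[n --> \oo] -->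
    rp pi s + gamma * \sum_y K pi s y * Vs P r gamma pi y.
  have E : forall n, usum s n.+1 =
      rp pi s + gamma * \sum_y K pi s y * usum y n.
    move=> n; rewrite /usum big_ord_recl expr0 mul1r; congr (_ + _).
      rewrite /exp_reward /=; rewrite (bigD1 s) //= eqxx mul1r [X in _ + X]big1 ?addr0 //.
      by move=> x /negbTE ->; rewrite mul0r.
    rewrite [RHS]mulr_sumr; under [RHS]eq_bigr do rewrite mulr_sumr mulr_sumr.
    rewrite [RHS]exchange_big /=; apply: eq_bigr => t _.
    rewrite /bump /= add1n er_step exprS !mulr_sumr; apply: eq_bigr => y _.
    by ring.
  under eq_fun do rewrite E.
  apply: cvgD; first exact: cvg_cst.
  apply: cvgMl_tmp; apply: cvg_sumR => y.
  by apply: cvgMl_tmp; exact: (@usum_cvg y).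
exact: (cvg_unique _ H1 H2).
Qed.

Lemma Bellman_Q s : Vs P r gamma pi s = \sum_a pi s a * Qsa P r gamma pi s a.
Proof. by rewrite sumQ -Bellman_K. Qed.

Lemma adv_sum s : \sum_a pi s a * adv P r gamma pi s a = 0.
Proof.
rewrite /adv; under eq_bigr do rewrite mulrBr.
by rewrite sumrB -mulr_suml pi_sum mul1r -Bellman_Q subrr.
Qed.

End Pol.

Lemma min_principle pi (Hpi : is_policy pi) (d : S -> R) :
  (forall s, gamma * \sum_y K pi s y * d y <= d s) -> forall s, 0 <= d s.
Proof.
move=> H s; have [j Hj] := ex_argmin s d.
suff h : 0 <= d j by apply: le_trans h (Hj s).
have h1 : d j <= \sum_y K pi j y * d y.
  rewrite -[X in X <= _]mul1r -(K_sum Hpi j) mulr_suml; apply: ler_sum => y _.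
  by rewrite ler_wpM2l ?K_ge0.
have := H j; have := g_bnd => /andP[g0 g1].
move: h1; set x := d j; set y := \sum_y _ => h1 h2.
nra.
Qed.

Lemma Vs_ge0 pi (Hpi : is_policy pi) s : 0 <= Vs P r gamma pi s.
Proof.
apply: (min_principle Hpi) => x; rewrite [X in _ <= X](Bellman_K Hpi) lerDr.
by case/andP: (rp_bnd Hpi x).
Qed.

Lemma Vs_le pi (Hpi : is_policy pi) s : Vs P r gamma pi s <= (1 - gamma)^-1.
Proof.
rewrite -subr_ge0; apply: (min_principle Hpi (d := fun s => (1 - gamma)^-1 - Vs P r gamma pi s)) => x.
have E : \sum_y K pi x y * ((1 - gamma)^-1 - Vs P r gamma pi y) =
   (1 - gamma)^-1 - \sum_y K pi x y * Vs P r gamma pi y.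
  under eq_bigr do rewrite mulrBr.
  by rewrite sumrB -mulr_suml (K_sum Hpi) mul1r.
rewrite E (Bellman_K Hpi x).
have := rp_bnd Hpi x => /andP[_ h].
have := g_bnd => /andP[g0 g1].
set y := \sum_y _.
have e : (1 - gamma)^-1 = 1 + gamma * (1 - gamma)^-1.
  by field; rewrite subr_eq0 gt_eqF.
rewrite {2}e; lra.
Qed.

Lemma improve pi pi' : is_policy pi -> is_policy pi' ->
  (forall s, 0 <= \sum_a pi' s a * adv P r gamma pi s a) ->
  forall s, \sum_a pi' s a * adv P r gamma pi s a <=
            Vs P r gamma pi' s - Vs P r gamma pi s.
Proof.
move=> Hpi Hpi' Hg.
have E : forall s, Vs P r gamma pi' s - Vs P r gamma pi s =
   \sum_a pi' s a * adv P r gamma pi s a +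
   gamma * \sum_y K pi' s y * (Vs P r gamma pi' y - Vs P r gamma pi y).
  move=> s; rewrite /adv; under eq_bigr do rewrite mulrBr.
  rewrite sumrB -mulr_suml (pi_sum Hpi') mul1r sumQ.
  have -> : \sum_y K pi' s y * (Vs P r gamma pi' y - Vs P r gamma pi y) =
    \sum_y K pi' s y * Vs P r gamma pi' y - \sum_y K pi' s y * Vs P r gamma pi y.
    by rewrite -sumrB; apply: eq_bigr => y _; rewrite mulrBr.
  rewrite {1}(Bellman_K Hpi' s); ring.
have Hd : forall s, 0 <= Vs P r gamma pi' s - Vs P r gamma pi s.
  apply: (min_principle Hpi') => s; rewrite [X in _ <= X]E lerDr; exact: Hg.
move=> s; rewrite E lerDl mulr_ge0 //; first by case/andP: g_bnd.
by apply: sumr_ge0 => y _; rewrite mulr_ge0 ?K_ge0.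
Qed.


Lemma posp_ge0 (x : R) : 0 <= posp x.
Proof. by rewrite /posp le_max lexx orbT. Qed.
Lemma posp_ge (x : R) : x <= posp x.
Proof. by rewrite /posp le_max lexx. Qed.
Lemma posp_id (x : R) : 0 <= x -> posp x = x.
Proof. by move=> h; rewrite /posp max_l. Qed.
Lemma posp_0 (x : R) : x <= 0 -> posp x = 0.
Proof. by move=> h; rewrite /posp max_r. Qed.

Lemma expR_ge1 (x : R) : 0 <= x -> 1 <= expR x.
Proof. by move=> h; rewrite -expR0 ler_expR. Qed.

Lemma adv_le pi (Hpi : is_policy pi) s a :
  adv P r gamma pi s a <= (1 - gamma)^-1.
Proof.
rewrite /adv /Qsa.
have h1 : \sum_y P s a y * Vs P r gamma pi y <= (1 - gamma)^-1.
  rewrite -[X in _ <= X]mul1r -{1}(P_sum s a) mulr_suml; apply: ler_sum => y _.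
  by rewrite ler_wpM2l ?P_ge0 ?(Vs_le Hpi).
have h2 := Vs_ge0 Hpi s.
have := r_bnd s a => /andP[_ h3].
have := g_bnd => /andP[g0 g1].
have e : (1 - gamma)^-1 = 1 + gamma * (1 - gamma)^-1.
  by field; rewrite subr_eq0 gt_eqF.
move: h1; set y := \sum_y _; move=> h1.
rewrite [X in _ <= X]e; nra.
Qed.

Lemma Qsa_cont pi s a : Qsa P r gamma pi s a = r s a + gamma * \sum_y P s a y * Vs P r gamma pi y.
Proof. by []. Qed.

Section EG.
Variables (eta : R) (theta : S -> A -> R) (a0 : A).
Hypothesis Heta : 0 < eta.
Notation pit t := (eg_iter P r gamma eta theta t).

Lemma Zn_ge1 pi (Hpi : is_policy pi) s : 1 <= Zn P r gamma eta pi s.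
Proof.
rewrite -(pi_sum Hpi s) /Zn; apply: ler_sum => a _.
by rewrite ler_peMr ?pi_ge0 //; apply: expR_ge1; exact: mulr_ge0 (ltW Heta) (posp_ge0 _).
Qed.


Lemma softmax_pol : is_policy (softmax theta) /\ full_support (softmax theta).
Proof.
have Hs : forall s, 0 < \sum_a expR (theta s a).
  move=> s; rewrite (bigD1 a0) //=; apply: (lt_le_trans (expR_gt0 (theta s a0))).
  by rewrite lerDl sumr_ge0 // => a _; exact: expR_ge0.
split; last by move=> s a; rewrite /softmax divr_gt0 ?expR_gt0.
split; first by move=> s a; rewrite /softmax ltW // divr_gt0 ?expR_gt0.
by move=> s; rewrite /softmax -mulr_suml divff // gt_eqF.
Qed.

Lemma Zn_le pi (Hpi : is_policy pi) s :
  Zn P r gamma eta pi s <= expR (eta * (1 - gamma)^-1).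
Proof.
rewrite -[X in _ <= X]mul1r -{1}(pi_sum Hpi s) mulr_suml /Zn; apply: ler_sum => a _.
rewrite ler_wpM2l ?pi_ge0 // ler_expR; apply: ler_wpM2l; first exact: ltW.
rewrite /posp ge_max (adv_le Hpi) /= invr_ge0 subr_ge0.
by case/andP: g_bnd => _ /ltW.
Qed.

Lemma step_pol pi : is_policy pi -> full_support pi ->
  is_policy (eg_step P r gamma eta pi) /\ full_support (eg_step P r gamma eta pi).
Proof.
move=> Hpi Hf.
have Z0 : forall s, 0 < Zn P r gamma eta pi s.
  by move=> s; apply: lt_le_trans (Zn_ge1 Hpi s).
split; last by move=> s a; rewrite /eg_step divr_gt0 ?mulr_gt0 ?expR_gt0.
split; first by move=> s a; rewrite /eg_step ltW // divr_gt0 ?mulr_gt0 ?expR_gt0.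
by move=> s; rewrite /eg_step -mulr_suml -/(Zn P r gamma eta pi s) divff // gt_eqF.
Qed.

Lemma eg_pol t : is_policy (pit t) /\ full_support (pit t).
Proof.
elim: t => [|t [IH1 IH2]]; first exact: softmax_pol.
exact: step_pol.
Qed.

Lemma posp_ineq (x : R) : eta * posp x ^+ 2 <= (expR (eta * posp x) - 1) * x.
Proof.
case: (lerP x 0) => hx.
  by rewrite posp_0 // expr2 !mulr0 expR0 subrr mul0r.
rewrite (posp_id (ltW hx)) expr2 mulrA ler_pM2r //.
by rewrite lerBrDl expR_ge1Dx.
Qed.

Definition hh pi s := \sum_a pi s a * posp (adv P r gamma pi s a) ^+ 2.

Lemma hh_ge0 pi (Hpi : is_policy pi) s : 0 <= hh pi s.
Proof. by apply: sumr_ge0 => a _; rewrite mulr_ge0 ?pi_ge0 ?exprn_ge0 ?posp_ge0. Qed.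

Lemma g_lower pi (Hpi : is_policy pi) s :
  eta / expR (eta * (1 - gamma)^-1) * hh pi s <=
  \sum_a eg_step P r gamma eta pi s a * adv P r gamma pi s a.
Proof.
set Z := Zn P r gamma eta pi s.
have Z1 := Zn_ge1 Hpi s; have ZC := Zn_le Hpi s.
have E : \sum_a eg_step P r gamma eta pi s a * adv P r gamma pi s a =
    Z^-1 * \sum_a pi s a * ((expR (eta * posp (adv P r gamma pi s a)) - 1) * adv P r gamma pi s a).
  have -> : \sum_a pi s a * ((expR (eta * posp (adv P r gamma pi s a)) - 1) * adv P r gamma pi s a) =
     \sum_a pi s a * expR (eta * posp (adv P r gamma pi s a)) * adv P r gamma pi s a.
    apply/eqP; rewrite -subr_eq0 -sumrB.
    rewrite (eq_bigr (fun a => - (pi s a * adv P r gamma pi s a))); last by move=> a _; ring.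
    by rewrite sumrN adv_sum // oppr0.
  by rewrite mulr_sumr; apply: eq_bigr => a _; rewrite /eg_step; ring.
rewrite E.
have H1 : eta * hh pi s <= \sum_a pi s a * ((expR (eta * posp (adv P r gamma pi s a)) - 1) * adv P r gamma pi s a).
  rewrite /hh mulr_sumr; apply: ler_sum => a _.
  by rewrite mulrCA ler_wpM2l ?pi_ge0 ?posp_ineq.
have h0 := hh_ge0 Hpi s.
have Z0 : 0 < Z by apply: lt_le_trans Z1.
apply: le_trans (ler_wpM2l _ H1); last by rewrite invr_ge0 ltW.
rewrite mulrA [Z^-1 * eta]mulrC; apply: (ler_wpM2r h0).
apply: (ler_wpM2l (ltW Heta)).
by rewrite lef_pV2 ?posrE ?expR_gt0.
Qed.

Lemma V_incr t s : eta / expR (eta * (1 - gamma)^-1) * hh (pit t) s <=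
   Vs P r gamma (pit t.+1) s - Vs P r gamma (pit t) s.
Proof.
have [H1 H2] := eg_pol t; have [H3 _] := eg_pol t.+1.
have Hg : forall s, 0 <= \sum_a pit t.+1 s a * adv P r gamma (pit t) s a.
  move=> x; apply: le_trans (g_lower H1 x).
  by rewrite mulr_ge0 ?hh_ge0 // divr_ge0 ?ltW ?expR_gt0.
apply: le_trans (g_lower H1 s) _.
exact: (improve H1 H3 Hg s).
Qed.

Lemma V_nd s : nondecreasing_seq (fun t => Vs P r gamma (pit t) s).
Proof.
apply/nondecreasing_seqP => t; rewrite -subr_ge0; apply: le_trans (V_incr t s).
have [H1 _] := eg_pol t.
by rewrite mulr_ge0 ?hh_ge0 // divr_ge0 ?ltW ?expR_gt0.
Qed.

Definition Vinf s := limn (fun t => Vs P r gamma (pit t) s).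

Lemma V_to s : Vs P r gamma (pit t) s @[t --> \oo] --> Vinf s.
Proof.
have H : cvgn (fun t => Vs P r gamma (pit t) s).
  apply: nondecreasing_is_cvgn; first exact: V_nd.
  exists (1 - gamma)^-1 => _ [t _ <-]; have [H1 _] := eg_pol t; exact: Vs_le.
exact: H.
Qed.

Lemma hh_to0 s : hh (pit t) s @[t --> \oo] --> 0.
Proof.
set c := eta / expR (eta * (1 - gamma)^-1).
have c0 : 0 < c by rewrite divr_gt0 ?expR_gt0.
apply: (@squeeze_cvgr _ _ _ _ (fun _ => 0) (fun t => c^-1 * (Vs P r gamma (pit t.+1) s - Vs P r gamma (pit t) s))).
- apply: nearW => t; have [H1 _] := eg_pol t; rewrite hh_ge0 //=.
  by rewrite ler_pdivlMl // V_incr.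
- exact: cvg_cst.
- have H : (fun t => c^-1 * (Vs P r gamma (pit t.+1) s - Vs P r gamma (pit t) s))
      @ \oo --> c^-1 * (Vinf s - Vinf s).
    apply: cvgMl_tmp; apply: cvgB; last exact: V_to.
    by rewrite (cvg_shiftS (fun t => Vs P r gamma (pit t) s)); exact: V_to.
  by rewrite subrr mulr0 in H.
Qed.

Definition Qinf s a := r s a + gamma * \sum_y P s a y * Vinf y.
Definition Uinf s a := Qinf s a - Vinf s.

Lemma adv_to s a : adv P r gamma (pit t) s a @[t --> \oo] --> Uinf s a.
Proof.
apply: cvgB; last exact: V_to.
apply: cvgD; first exact: cvg_cst.
apply: cvgMl_tmp; apply: cvg_sumR => y; apply: cvgMl_tmp; exact: V_to.
Qed.


Lemma geo_decay (u : nat -> R) (q : R) : 0 <= q < 1 -> (forall t, 0 <= u t) ->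
  (\forall t \near \oo, u t.+1 <= q * u t) -> u t @[t --> \oo] --> 0.
Proof.
move=> /andP[q0 q1] u0 [N _ HN].
have Hk : forall k, u (k + N)%N <= q ^+ k * u N.
  elim=> [|k IH]; first by rewrite add0n expr0 mul1r.
  rewrite addSn; apply: le_trans (HN (k + N)%N _) _; first by rewrite /= leq_addl.
  by rewrite exprS -mulrA; apply: ler_wpM2l.
rewrite -(cvg_shiftn N).
apply: (@squeeze_cvgr _ _ _ _ (fun _ => 0) (fun k => q ^+ k * u N)).
- by apply: nearW => k; rewrite u0 Hk.
- exact: cvg_cst.
- have H : (fun k => q ^+ k * u N) @ \oo --> 0 * u N.
    by apply: cvgMr_tmp; apply: cvg_expr; rewrite ger0_norm.
  by rewrite mul0r in H.
Qed.

Lemma single_le_sum (I : finType) (F : I -> R) j :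
  (forall i, 0 <= F i) -> F j <= \sum_i F i.
Proof. by move=> H; rewrite (bigD1 j) //= lerDl sumr_ge0. Qed.

Lemma ratio_step pi (Hpi : is_policy pi) (Hf : full_support pi) s b a1 :
  eg_step P r gamma eta pi s b / eg_step P r gamma eta pi s a1 =
  pi s b / pi s a1 * expR (eta * posp (adv P r gamma pi s b) -
                           eta * posp (adv P r gamma pi s a1)).
Proof.
have Z0 : Zn P r gamma eta pi s != 0.
  by rewrite gt_eqF //; apply: lt_le_trans (Zn_ge1 Hpi s).
have p0 : pi s a1 != 0 by rewrite gt_eqF.
rewrite /eg_step expRB; field.
by rewrite Z0 p0 expR_eq0.
Qed.

Lemma Uinf_le0 s a : Uinf s a <= 0.
Proof.
rewrite leNgt; apply/negP => Hpos.
have [a1 Ha1] := ex_argmax a (Uinf s).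
set c := Uinf s a1.
have c0 : 0 < c by apply: lt_le_trans (Ha1 a).
have Hb : forall b, pit t s b @[t --> \oo] --> 0.
  move=> b; case: (lerP (Uinf s b) 0) => hb.
  - pose u t := pit t s b / pit t s a1.
    have u0 : forall t, 0 <= u t.
      by move=> t; have [[H1 _] H2] := eg_pol t; rewrite /u divr_ge0 ?H1.
    have Hu : u t @[t --> \oo] --> 0.
      apply: (geo_decay (q := expR (- (eta * c / 2)))) => //.
        rewrite expR_ge0 /= expR_lt1 oppr_lt0.
        by rewrite divr_gt0 ?mulr_gt0.
      have hlt1 : Uinf s b < c / 4 by apply: le_lt_trans hb _; rewrite divr_gt0.
      have hlt2 : 3 * c / 4 < Uinf s a1 by rewrite -/c; lra.
      near=> t.
      have h1 : adv P r gamma (pit t) s b < c / 4.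
        near: t; exact: (cvgr_lt _ (@adv_to s b) _ hlt1).
      have h2 : 3 * c / 4 < adv P r gamma (pit t) s a1.
        near: t; exact: (cvgr_gt _ (@adv_to s a1) _ hlt2).
      have [H1 H2] := eg_pol t.
      rewrite /u /= ratio_step // mulrC; apply: ler_wpM2r; first exact: u0.
      rewrite ler_expR.
      have e1 : posp (adv P r gamma (pit t) s b) <= c / 4.
        by rewrite /posp ge_max (ltW h1) /= divr_ge0 // ltW.
      have e2 : adv P r gamma (pit t) s a1 <= posp (adv P r gamma (pit t) s a1).
        exact: posp_ge.
      move: e1 e2 h2; set x := posp _; set y := posp _; set z := adv _ _ _ _ _ _.
      move=> e1 e2 h2.
      have : eta * (x - y) <= eta * (- (c / 2)).
        by apply: ler_wpM2l; [exact: ltW | lra].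
      lra.
    apply: (@squeeze_cvgr _ _ _ _ (fun _ => 0) u); last 2 first.
    + exact: cvg_cst.
    + exact: Hu.
    apply: nearW => t; have [[H1 H3] H2] := eg_pol t.
    rewrite H1 /= /u ler_pdivlMr // ler_piMr ?H1 //.
    by rewrite -(H3 s); apply: single_le_sum.
  - set d := Uinf s b / 2.
    have d0 : 0 < d by rewrite divr_gt0.
    apply: (@squeeze_cvgr _ _ _ _ (fun _ => 0) (fun t => hh (pit t) s / d ^+ 2)); last 2 first.
    + exact: cvg_cst.
    + have H : (fun t => hh (pit t) s / d ^+ 2) @ \oo --> 0 / d ^+ 2.
        by apply: cvgMr_tmp; exact: hh_to0.
      by rewrite mul0r in H.
    have hlt : d < Uinf s b by rewrite /d; lra.
    near=> t.
    have h1 : d < adv P r gamma (pit t) s b.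
      near: t; exact: (cvgr_gt _ (@adv_to s b) _ hlt).
    have [[H1 H3] H2] := eg_pol t.
    rewrite H1 /= ler_pdivlMr ?exprn_gt0 //.
    apply: le_trans (single_le_sum b _); last first.
      by move=> i; rewrite mulr_ge0 ?H1 ?exprn_ge0 ?posp_ge0.
    apply: ler_wpM2l; first exact: H1.
    have e : d <= posp (adv P r gamma (pit t) s b) by apply: le_trans (ltW h1) (posp_ge _).
    by rewrite !expr2; apply: ler_pM => //; exact: ltW.
have H : (fun t => \sum_b pit t s b) @ \oo --> \sum_(b : A) (0:R) := cvg_sumR Hb.
have E : (fun t => \sum_b pit t s b) = fun _ => 1.
  by apply: funext => t; exact: pi_sum (proj1 (eg_pol t)) s.
rewrite E big1_eq in H.
have h : (0:R) = 1 by exact: (cvg_unique _ H (cvg_cst (1:R))).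
by move: h => /eqP; rewrite eq_sym oner_eq0.
Unshelve. all: by end_near.
Qed.


Section Opt.
Variable pistar : S -> A -> R.
Hypothesis Hopt : optimal_policy P r gamma pistar.
Hypothesis Huniq : forall pi, optimal_policy P r gamma pi -> forall s a, pi s a = pistar s a.

Lemma Vinf_eq s : Vinf s = Vs P r gamma pistar s.
Proof.
have [Hps Hopt2] := Hopt.
apply/eqP; rewrite eq_le; apply/andP; split.
  apply: limr_le; first exact: (cvgP _ (@V_to s)).
  by apply: nearW => t; exact: Hopt2 _ (proj1 (eg_pol t)) s.
rewrite -subr_ge0.
apply: (min_principle Hps (d := fun x => Vinf x - Vs P r gamma pistar x)) => x.
have h1 : rp pistar x + gamma * \sum_y K pistar x y * Vinf y <= Vinf x.
  rewrite -sumQW -[X in _ <= X]mul1r -(pi_sum Hps x) mulr_suml.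
  apply: ler_sum => b _; apply: ler_wpM2l; first exact: pi_ge0.
  by rewrite -subr_le0; exact: Uinf_le0.
have E : \sum_y K pistar x y * (Vinf y - Vs P r gamma pistar y) =
   \sum_y K pistar x y * Vinf y - \sum_y K pistar x y * Vs P r gamma pistar y.
  by rewrite -sumrB; apply: eq_bigr => y _; rewrite mulrBr.
rewrite E (Bellman_K Hps x).
move: h1; set u := \sum_y K pistar x y * Vinf y.
set v := \sum_y K pistar x y * Vs P r gamma pistar y.
move=> h1; rewrite mulrBr; lra.
Qed.

Lemma Vrho_to rho : Vrho P r gamma rho (pit t) @[t --> \oo] --> Vrho P r gamma rho pistar.
Proof.
rewrite /Vrho; apply: cvg_sumR => s; apply: cvgMl_tmp; rewrite -Vinf_eq; exact: V_to.
Qed.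

Lemma Uinf_adv s a : Uinf s a = adv P r gamma pistar s a.
Proof.
have EV : Vinf = Vs P r gamma pistar by apply: funext => x; exact: Vinf_eq.
by rewrite /Uinf /Qinf /adv /Qsa EV.
Qed.

Lemma pistar_zero s a : Uinf s a < 0 -> pistar s a = 0.
Proof.
move=> ha; have [Hps _] := Hopt.
have H0 : \sum_b pistar s b * (- Uinf s b) = 0.
  under eq_bigr do rewrite mulrN Uinf_adv.
  by rewrite sumrN adv_sum // oppr0.
have : pistar s a * (- Uinf s a) <= 0.
  rewrite -H0; apply: (single_le_sum (F := fun b => pistar s b * - Uinf s b)) => b.
  by rewrite mulr_ge0 ?pi_ge0 // oppr_ge0 Uinf_le0.
rewrite pmulr_lle0 ?oppr_gt0 // => h.
by apply/eqP; rewrite eq_le h pi_ge0.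
Qed.

Lemma pit_zero s a : Uinf s a < 0 -> pit t s a @[t --> \oo] --> 0.
Proof.
move=> ha.
set e := fun t => \sum_b `|adv P r gamma (pit t) s b - Uinf s b|.
have He : e t @[t --> \oo] --> 0.
  have H : e t @[t --> \oo] --> \sum_(b : A) `|Uinf s b - Uinf s b|.
    apply: cvg_sumR => b; apply: cvg_norm; apply: cvgB; [exact: adv_to | exact: cvg_cst].
  have E0 : \sum_(b : A) `|Uinf s b - Uinf s b| = 0.
    by rewrite big1 // => b _; rewrite subrr normr0.
  by rewrite E0 in H.
apply: (@squeeze_cvgr _ _ _ _ (fun _ => 0) (fun t => e t / (- Uinf s a))); last 2 first.
- exact: cvg_cst.
- have H : (fun t => e t / (- Uinf s a)) @ \oo --> 0 / (- Uinf s a).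
    by apply: cvgMr_tmp.
  by rewrite mul0r in H.
apply: nearW => t; have [[H1 H3] H2] := eg_pol t.
rewrite H1 /= ler_pdivlMr ?oppr_gt0 //.
have E : \sum_b pit t s b * (- Uinf s b) =
    \sum_b pit t s b * (adv P r gamma (pit t) s b - Uinf s b).
  apply/eqP; rewrite -subr_eq0 -sumrB.
  rewrite (eq_bigr (fun b => - (pit t s b * adv P r gamma (pit t) s b))); last by move=> b _; ring.
  by rewrite sumrN adv_sum // oppr0.
apply: le_trans (_ : \sum_b pit t s b * (- Uinf s b) <= _).
  apply: (single_le_sum (F := fun b => pit t s b * - Uinf s b)) => b.
  by rewrite mulr_ge0 ?H1 // oppr_ge0 Uinf_le0.
rewrite E /e; apply: ler_sum => b _.
apply: le_trans (ler_norm _) _; rewrite normrM ger0_norm ?H1 //.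
rewrite ler_piMl ?normr_ge0 //.
by rewrite -(H3 s); apply: single_le_sum.
Qed.

Lemma pistar_one s a : Uinf s a = 0 -> pistar s a = 1.
Proof.
move=> ha; have [Hps Hopt2] := Hopt.
pose pi' x b : R := if x == s then (if b == a then 1 else 0) else pistar x b.
have Hp' : is_policy pi'.
  split.
    move=> x b; rewrite /pi'; case: (x == s); last exact: pi_ge0.
    by case: (b == a).
  move=> x; rewrite /pi'; case: (x == s); last exact: pi_sum.
  rewrite (bigD1 a) //= eqxx big1 ?addr0 // => b /negbTE -> //.
have Hg : forall x, \sum_b pi' x b * adv P r gamma pistar x b = 0.
  move=> x; rewrite /pi'; case: (x =P s) => [->|_]; last exact: adv_sum.
  rewrite (bigD1 a) //= eqxx mul1r big1 ?addr0 -?Uinf_adv // => b /negbTE ->.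
  by rewrite mul0r.
have HV : forall x, Vs P r gamma pi' x = Vs P r gamma pistar x.
  move=> x; apply/eqP; rewrite eq_le Hopt2 //=.
  rewrite -subr_ge0; apply: le_trans (improve Hps Hp' _ x); first by rewrite Hg.
  by move=> y; rewrite Hg.
have Ho' : optimal_policy P r gamma pi'.
  split => // pi'' Hpi'' x; rewrite HV; exact: Hopt2.
by rewrite -(Huniq Ho' s a) /pi' !eqxx.
Qed.

Lemma pit_to s a : pit t s a @[t --> \oo] --> pistar s a.
Proof.
have [Hps _] := Hopt.
case: (ltrgtP (Uinf s a) 0) => ha.
- by rewrite pistar_zero //; exact: pit_zero.
- by have := Uinf_le0 s a; rewrite leNgt ha.
have h1 := pistar_one ha; rewrite h1.
have Hb : forall b, b != a -> Uinf s b < 0.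
  move=> b hb; have hs := pi_sum Hps s.
  rewrite (bigD1 a) //= h1 in hs.
  have h0 : \sum_(i | i != a) pistar s i = 0.
    by apply: (addrI 1); rewrite addr0.
  have := (psumr_eq0P (fun i _ => pi_ge0 Hps s i) h0) b hb => hb0.
  rewrite lt_neqAle Uinf_le0 andbT; apply/eqP => hz.
  by move: (pistar_one hz); rewrite hb0 => /eqP; rewrite eq_sym oner_eq0.
have E : forall t, pit t s a = 1 - \sum_b (if b != a then pit t s b else 0).
  move=> t; have hs := pi_sum (proj1 (eg_pol t)) s.
  rewrite (bigD1 a) //= in hs.
  by rewrite -big_mkcond /= -hs addrK.
under eq_fun do rewrite E.
have H : (fun t => 1 - \sum_b (if b != a then pit t s b else 0)) @ \oo --> 1 - \sum_(b : A) (0:R).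
  apply: cvgB; first exact: cvg_cst.
  apply: cvg_sumR => b; case hb: (b != a); first exact: pit_zero (Hb _ hb).
  exact: cvg_cst.
by rewrite big1_eq subr0 in H.
Qed.

End Opt.
End EG.
End MDPp.

Theorem theorem5 (R : realType) (S A : finType)
  (P : S -> A -> S -> R) (r : S -> A -> R) (gamma : R) (rho : S -> R)
  (pistar : S -> A -> R) (dmin : R) :
  is_mdp P r gamma -> is_dist rho ->
  (* unique optimal policy *)
  optimal_policy P r gamma pistar ->
  (forall pi, optimal_policy P r gamma pi -> forall s a, pi s a = pistar s a) ->
  (* all states reachable *)
  0 < dmin ->
  (forall pi, is_policy pi -> full_support pi ->
     forall s, dmin <= visitation P gamma rho pi s) ->
  exists eta0 : R, 0 < eta0 /\
    forall eta : R, 0 < eta -> eta <= eta0 ->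
    forall theta : S -> A -> R,
      (Vrho P r gamma rho (eg_iter P r gamma eta theta t) @[t --> \oo]
         --> Vrho P r gamma rho pistar) /\
      (forall s a, eg_iter P r gamma eta theta t s a @[t --> \oo] --> pistar s a).
Proof.
move=> HM Hrho Hopt Huniq _ _.
have [s0 _] : exists s : S, True.
  have [x _|Hn] := pickP (@predT S); first by exists x.
  by have := proj2 Hrho; rewrite big_pred0 // => /eqP; rewrite eq_sym oner_eq0.
have [a0 _] : exists a : A, True.
  have [x _|Hn] := pickP (@predT A); first by exists x.
  by have := proj2 (proj1 Hopt) s0; rewrite big_pred0 // => /eqP; rewrite eq_sym oner_eq0.
exists 1; split; first exact: ltr01.
move=> eta Heta _ theta; split.
  exact: (Vrho_to HM theta a0 Heta Hopt).
move=> s a; exact: (pit_to HM theta a0 Heta Hopt Huniq).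
Qed.
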